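(* Let $S=\bigoplus_{i\in\mathbb{Z}}S_i$ be an epsilon-strongly $\mathbb{Z}$-graded ring with principal component $R=S_0$. If $R$ is right (respectively left) noetherian, then $S$ is right (respectively left) noetherian.
   Context: All rings are associative with multiplicative identity $1\neq 0$. A ring $S$ is $\mathbb{Z}$-graded if $S=\bigoplus_{i\in\mathbb{Z}}S_i$ for additive subgroups $S_i$ with $S_iS_j\subseteq S_{i+j}$; $S_0$ is the principal component. $S$ is epsilon-strongly $\mathbb{Z}$-graded if (a) $S_iS_{-i}S_i=S_i$ for all $i$, and (b) for each $i$ the ideal $S_iS_{-i}$ of $S_0$ has a multiplicative identity. *)

(* Defs.v *)
From HB Require Import structures.
From mathcomp Require Import all_boot all_order all_algebra.
Set Implicit Arguments. Unset Strict Implicit. Unset Printing Implicit Defensive.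
Import GRing.Theory.
Local Open Scope ring_scope.


Section Defs.
Variable S : nzRingType.

Definition additive_subgroup (A : S -> Prop) : Prop :=
  A 0 /\ (forall x y, A x -> A y -> A (x - y)).

Definition mulset (A B : S -> Prop) : S -> Prop :=
  fun x => exists (n : nat) (a b : 'I_n -> S),
    (forall k, A (a k) /\ B (b k)) /\ x = \sum_(k < n) a k * b k.

Definition is_Zgrading (Sg : int -> S -> Prop) : Prop :=
  [/\ forall i, additive_subgroup (Sg i),
      forall x, exists (s : seq int) (f : int -> S),
        (forall i, Sg i (f i)) /\ x = \sum_(i <- s) f i,
      forall (s : seq int) (f : int -> S), uniq s ->
        (forall i, Sg i (f i)) -> \sum_(i <- s) f i = 0 ->
        forall i, i \in s -> f i = 0
    & forall i j x y, Sg i x -> Sg j y -> Sg (i + j)%R (x * y)].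

Definition epsilon_strong (Sg : int -> S -> Prop) : Prop :=
  is_Zgrading Sg /\
  forall i : int,
    (forall x, mulset (mulset (Sg i) (Sg (- i))) (Sg i) x <-> Sg i x) /\
    exists e, mulset (Sg i) (Sg (- i)) e /\
      forall x, mulset (Sg i) (Sg (- i)) x -> e * x = x /\ x * e = x.

Definition right_ideal_in (R0 I : S -> Prop) : Prop :=
  (forall x, I x -> R0 x) /\ I 0 /\
  (forall x y, I x -> I y -> I (x + y)) /\
  (forall x r, I x -> R0 r -> I (x * r)).

Definition left_ideal_in (R0 I : S -> Prop) : Prop :=
  (forall x, I x -> R0 x) /\ I 0 /\
  (forall x y, I x -> I y -> I (x + y)) /\
  (forall x r, I x -> R0 r -> I (r * x)).

Definition acc_chain (isI : (S -> Prop) -> Prop) : Prop :=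
  forall I : nat -> S -> Prop,
    (forall n, isI (I n)) ->
    (forall n x, I n x -> I n.+1 x) ->
    exists N, forall n, (N <= n)%N -> forall x, I n x <-> I N x.

Definition right_noetherian_in (R0 : S -> Prop) : Prop :=
  acc_chain (right_ideal_in R0).
Definition left_noetherian_in (R0 : S -> Prop) : Prop :=
  acc_chain (left_ideal_in R0).

Definition right_noetherian : Prop := right_noetherian_in (fun _ => True).
Definition left_noetherian : Prop := left_noetherian_in (fun _ => True).
End Defs.

(* Main.v *)
Require Import Defs.
From HB Require Import structures.
From mathcomp Require Import all_boot all_order all_algebra.
From mathcomp Require Import zify.
Set Implicit Arguments. Unset Strict Implicit. Unset Printing Implicit Defensive.
Import GRing.Theory Num.Theory Order.TTheory.
Local Open Scope ring_scope.

Section Generic.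
Variable S : nzRingType.

Lemma mulset1 (A B : S -> Prop) a b : A a -> B b -> mulset A B (a * b).
Proof. by move=> Ha Hb; exists 1%N, (fun _ => a), (fun _ => b); rewrite big_ord1. Qed.

Lemma mulset0 (A B : S -> Prop) : mulset A B 0.
Proof. by exists 0%N, (fun _ => 0), (fun _ => 0); split=> [[]|]; rewrite ?big_ord0. Qed.

Lemma mulsetD (A B : S -> Prop) x y : mulset A B x -> mulset A B y -> mulset A B (x + y).
Proof.
move=> [n [a [b [Hab ->]]]] [m [c [d [Hcd ->]]]].
exists (n + m)%N, (fun k => match split k with inl i => a i | inr j => c j end),
  (fun k => match split k with inl i => b i | inr j => d j end).
split; first by move=> k; case: (split k) => ?; [exact: Hab | exact: Hcd].
rewrite big_split_ord /=; congr (_ + _); apply: eq_bigr => i _.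
  by rewrite (unsplitK (inl i : 'I_n + 'I_m)).
by rewrite (unsplitK (inr i : 'I_n + 'I_m)).
Qed.

Lemma sum_closed (P : S -> Prop) n (f : 'I_n -> S) :
  P 0 -> (forall x y, P x -> P y -> P (x + y)) -> (forall k, P (f k)) -> P (\sum_(k < n) f k).
Proof. by move=> P0 PD Pf; apply: big_ind. Qed.

Lemma mulset_ind (A B P : S -> Prop) x :
  P 0 -> (forall x y, P x -> P y -> P (x + y)) -> (forall a b, A a -> B b -> P (a * b)) ->
  mulset A B x -> P x.
Proof.
move=> P0 PD Pab [n [a [b [Hab ->]]]]; apply: sum_closed => // k.
by case: (Hab k) => *; apply: Pab.
Qed.

Lemma left_id_mulset (M B : S -> Prop) e b :
  (forall p, M p -> e * p = p) -> mulset M B b -> e * b = b.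
Proof.
move=> He; apply: (@mulset_ind _ _ (fun b => e * b = b)).
- by rewrite mulr0.
- by move=> x y Hx Hy; rewrite mulrDr Hx Hy.
- by move=> a c Ha _; rewrite mulrA He.
Qed.

Lemma right_id_mulset (M B : S -> Prop) e b :
  (forall p, M p -> p * e = p) -> mulset B M b -> b * e = b.
Proof.
move=> He; apply: (@mulset_ind _ _ (fun b => b * e = b)).
- by rewrite mul0r.
- by move=> x y Hx Hy; rewrite mulrDl Hx Hy.
- by move=> a c _ Hc; rewrite -mulrA He.
Qed.

End Generic.

Section Grading.
Variable S : nzRingType.
Variable Sg : int -> S -> Prop.
Hypothesis Hg : is_Zgrading Sg.

Lemma Sg0 i : Sg i 0.
Proof. by case: Hg => H _ _ _; case: (H i). Qed.
Lemma SgB i x y : Sg i x -> Sg i y -> Sg i (x - y).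
Proof. by case: Hg => H _ _ _; case: (H i) => _; apply. Qed.
Lemma SgN i x : Sg i x -> Sg i (- x).
Proof. by move=> Hx; rewrite -sub0r; apply: SgB => //; apply: Sg0. Qed.
Lemma SgD i x y : Sg i x -> Sg i y -> Sg i (x + y).
Proof. by move=> Hx Hy; rewrite -[y]opprK; apply: SgB => //; apply: SgN. Qed.
Lemma SgM i j x y : Sg i x -> Sg j y -> Sg (i + j) (x * y).
Proof. by case: Hg => _ _ _; apply. Qed.
Lemma Sg_sum i n (f : 'I_n -> S) : (forall k, Sg i (f k)) -> Sg i (\sum_(k < n) f k).
Proof. by apply: sum_closed; [apply: Sg0 | apply: SgD]. Qed.
Lemma Sg_mulset i j x : mulset (Sg i) (Sg j) x -> Sg (i + j) x.
Proof.
apply: mulset_ind; [exact: Sg0 | exact: SgD | by move=> a b; apply: SgM].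
Qed.

Inductive Wset (P : int -> Prop) : S -> Prop :=
| W0 : Wset P 0
| WD d h x : P d -> Sg d h -> Wset P x -> Wset P (h + x).

Lemma WsetD P x y : Wset P x -> Wset P y -> Wset P (x + y).
Proof.
elim=> [|d h x' Pd Hh _ IH] Hy; first by rewrite add0r.
by rewrite -addrA; apply: (WD Pd Hh); apply: IH.
Qed.

Lemma WsetN P x : Wset P x -> Wset P (- x).
Proof.
elim=> [|d h x' Pd Hh _ IH]; first by rewrite oppr0; apply: W0.
by rewrite opprD; apply: (WD Pd (SgN Hh)).
Qed.

Lemma WsetM (P Q : int -> Prop) p w x :
  Sg p w -> (forall d, P d -> Q (d + p)) -> Wset P x -> Wset Q (x * w).
Proof.
move=> Hw PQ; elim=> [|d h x' Pd Hh _ IH]; first by rewrite mul0r; apply: W0.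
by rewrite mulrDl; apply: (WD (d := d + p)); [apply: PQ | apply: SgM |].
Qed.

Lemma Wset_mono (P Q : int -> Prop) x : (forall d, P d -> Q d) -> Wset P x -> Wset Q x.
Proof.
move=> PQ; elim=> [|d h x' Pd Hh _ IH]; first exact: W0.
by apply: (WD (d := d)) => //; apply: PQ.
Qed.

Lemma Wset_split (P Q : int -> Prop) d0 x :
  (forall d, P d -> d = d0 \/ Q d) -> Wset P x ->
  exists a y, Sg d0 a /\ Wset Q y /\ x = a + y.
Proof.
move=> PQ; elim=> [|d h x' Pd Hh _ [a [y [Ha [Hy ->]]]]].
  by exists 0, 0; split; [apply: Sg0 | split; [apply: W0 | rewrite addr0]].
case: (PQ d Pd) => [Ed|Qd].
  exists (h + a), y; split; first by apply: SgD => //; rewrite -Ed.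
  by split => //; rewrite addrA.
exists a, (h + y); split => //; split; first exact: (WD Qd Hh).
by rewrite addrCA.
Qed.

Lemma Wset_empty x : Wset (fun d => 0 <= d < 0%N%:Z) x -> x = 0.
Proof. by case=> // d h x' /andP[H1 H2]; exfalso; lia. Qed.

Lemma Wset_bound x : Wset (fun d => 0 <= d) x ->
  exists n : nat, Wset (fun d => 0 <= d < n%:Z) x.
Proof.
elim=> [|d h x' Pd Hh _ [n Hn]]; first by exists 0%N; apply: W0.
exists (maxn n (absz d).+1); apply: (WD (d := d)); [lia | done |].
by apply: Wset_mono Hn => e /andP [H1 H2]; apply/andP; split; lia.
Qed.

Lemma Wset_all x : exists m : nat, Wset (fun d => - (m%:Z) <= d) x.
Proof.
case: Hg => _ Hdec _ _; case: (Hdec x) => s [f [Hf ->]].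
elim: s => [|i s [m Hm]]; first by exists 0%N; rewrite big_nil; apply: W0.
exists (maxn m (absz i)); rewrite big_cons; apply: (WD (d := i)) => //; first lia.
by apply: Wset_mono Hm => e He; lia.
Qed.

End Grading.

Section Main.
Variable S : nzRingType.
Variable Sg : int -> S -> Prop.
Hypothesis Hg : is_Zgrading Sg.
Hypothesis He : forall i, exists e, mulset (Sg i) (Sg (- i)) e /\
  forall b, Sg (- i) b -> b * e = b.

Definition rid (J : S -> Prop) := right_ideal_in (fun _ => True) J.

Lemma J0 J : rid J -> J 0. Proof. by case=> _ []. Qed.
Lemma JD J x y : rid J -> J x -> J y -> J (x + y). Proof. by case=> _ [_ []] H _; apply: H. Qed.
Lemma JM J x r : rid J -> J x -> J (x * r). Proof. by case=> _ [_ [_ H]] Hx; apply: H. Qed.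
Lemma JN J x : rid J -> J x -> J (- x).
Proof. by move=> HJ Hx; rewrite -mulrN1; apply: JM. Qed.
Lemma JB J x y : rid J -> J x -> J y -> J (x - y).
Proof. by move=> HJ Hx Hy; apply: JD => //; apply: JN. Qed.

Definition Wlt (n : nat) := Wset Sg (fun d => 0 <= d < n%:Z).

Definition T (n : nat) (J : S -> Prop) a :=
  Sg n%:Z a /\ exists y, Wlt n y /\ J (a + y).

Lemma T0 n J : rid J -> T n J 0.
Proof. by move=> HJ; split; [apply: Sg0 | exists 0; split; [apply: W0 | rewrite addr0; apply: J0]]. Qed.

Lemma TD n J a b : rid J -> T n J a -> T n J b -> T n J (a + b).
Proof.
move=> HJ [Ha [y [Hy Jy]]] [Hb [z [Hz Jz]]]; split; first exact: SgD.
exists (y + z); split; first exact: WsetD.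
by rewrite addrACA; apply: JD.
Qed.

Lemma Tshift m p J c w : rid J -> T m J c -> Sg p%:Z w -> T (m + p) J (c * w).
Proof.
move=> HJ [Hc [y [Hy Jy]]] Hw; split; first by rewrite PoszD; apply: SgM.
exists (y * w); split.
  by apply: (WsetM Hg Hw) Hy => d /andP [H1 H2]; apply/andP; split; lia.
by rewrite -mulrDl; apply: JM.
Qed.

Lemma Tmono n (J J' : S -> Prop) a : (forall x, J x -> J' x) -> T n J a -> T n J' a.
Proof. by move=> JJ [Ha [y [Hy Jy]]]; split => //; exists y; split => //; apply: JJ. Qed.

Definition A (n : nat) (J : S -> Prop) := mulset (T n J) (Sg (- (n%:Z))).

Lemma A_rid n J : rid J -> right_ideal_in (Sg 0) (A n J).
Proof.
move=> HJ; split.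
  move=> x Hx; rewrite -(addrN (n%:Z)).
  by apply: (mulset_ind (Sg0 Hg _) (@SgD _ _ Hg _)) Hx => a b [Ha _] Hb; apply: SgM.
split; first exact: mulset0.
split; first by move=> x y; apply: mulsetD.
move=> x r Hx Hr; case: Hx => k [a [b [Hab ->]]].
exists k, a, (fun i => b i * r); split.
  by move=> i; case: (Hab i) => Ha Hb; split => //; rewrite -[X in Sg X](addr0); apply: SgM.
by rewrite mulr_suml; apply: eq_bigr => i _; rewrite mulrA.
Qed.

Lemma Amono n (J J' : S -> Prop) z : (forall x, J x -> J' x) -> A n J z -> A n J' z.
Proof.
move=> JJ [k [a [b [Hab ->]]]]; exists k, a, b; split => //.
by move=> i; case: (Hab i) => Ha Hb; split => //; apply: Tmono Ha.
Qed.

Definition G (n : nat) (J : S -> Prop) z := forall v, Sg n%:Z v -> T n J (z * v).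

Lemma G0 n J : rid J -> G n J 0.
Proof. by move=> HJ v _; rewrite mul0r; apply: T0. Qed.
Lemma GD n J x y : rid J -> G n J x -> G n J y -> G n J (x + y).
Proof. by move=> HJ Hx Hy v Hv; rewrite mulrDl; apply: TD => //; [apply: Hx | apply: Hy]. Qed.

Lemma GA m n J z : rid J -> (m <= n)%N -> A m J z -> G n J z.
Proof.
move=> HJ mn; apply: mulset_ind; [exact: G0 | by move=> *; apply: GD |].
move=> c d Hc Hd v Hv; rewrite -mulrA -(subnKC mn); apply: Tshift => //.
have := SgM Hg Hd Hv; congr (Sg _ _); lia.
Qed.

Lemma Gmono n (J J' : S -> Prop) z : (forall x, J x -> J' x) -> G n J z -> G n J' z.
Proof. by move=> JJ Hz v Hv; apply: Tmono JJ _; apply: Hz. Qed.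

Lemma key n (J J' : S -> Prop) a : rid J' -> (forall z, A n J z -> G n J' z) -> T n J a -> T n J' a.
Proof.
move=> HJ' AG Ta; case: (Ta) => Ha _.
case: (He (- (n%:Z))) => e [[k [u [v [Huv Ee]]]] Hid].
have Hn : Sg (- - (n%:Z)) a by rewrite opprK.
rewrite -(Hid a Hn) Ee mulr_sumr.
apply: sum_closed; [exact: T0 | by move=> *; apply: TD |].
move=> i; case: (Huv i) => Hu Hv; rewrite mulrA; apply: AG; first exact: mulset1.
by rewrite -(opprK (n%:Z)).
Qed.

End Main.

Section Main2.
Variable S : nzRingType.
Variable Sg : int -> S -> Prop.
Hypothesis Hg : is_Zgrading Sg.
Hypothesis He : forall i, exists e, mulset (Sg i) (Sg (- i)) e /\
  forall b, Sg (- i) b -> b * e = b.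

Variable I : nat -> S -> Prop.
Hypothesis Iid : forall n, rid (I n).
Hypothesis Imono : forall n x, I n x -> I n.+1 x.

Lemma Ichain m k x : (m <= k)%N -> I m x -> I k x.
Proof.
move=> mk; rewrite -(subnKC mk); elim: (k - m)%N => [|j IH] Hx; first by rewrite addn0.
by rewrite addnS; apply: Imono; apply: IH.
Qed.

Definition N k x := exists f : nat -> S,
  (forall n, (n < k)%N -> A Sg n (I k) (f n)) /\ x = \sum_(n < k) f n.

Lemma N_rid k : right_ideal_in (Sg 0) (N k).
Proof.
split.
  move=> x [f [Hf ->]]; apply: (Sg_sum Hg) => i.
  by case: (A_rid Hg i (Iid k)) => + _; apply; apply: Hf.
split.
  exists (fun _ => 0); split; last by rewrite big1.
  by move=> n _; case: (A_rid Hg n (Iid k)) => _ [].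
split.
  move=> x y [f [Hf ->]] [g [Hg' ->]]; exists (fun n => f n + g n); split; last by rewrite big_split.
  by move=> n nk; case: (A_rid Hg n (Iid k)) => _ [_ [H _]]; apply: H; [apply: Hf | apply: Hg'].
move=> x r [f [Hf ->]] Hr; exists (fun n => f n * r); split; last by rewrite mulr_suml.
by move=> n nk; case: (A_rid Hg n (Iid k)) => _ [_ [_ H]]; apply: H => //; apply: Hf.
Qed.

Lemma N_mono k x : N k x -> N k.+1 x.
Proof.
move=> [f [Hf ->]]; exists (fun n => if (n < k)%N then f n else 0); split.
  move=> n nk; case: ifP => nk'.
    by apply: Amono (Hf n nk') => y; apply: Imono.
  by case: (A_rid Hg n (Iid k.+1)) => _ [].
rewrite big_ord_recr /= ltnn addr0; apply: eq_bigr => i _.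
by rewrite /= ltn_ord.
Qed.

Lemma A_in_N n k z : (n < k)%N -> A Sg n (I k) z -> N k z.
Proof.
move=> nk Hz; exists (fun m => if m == n then z else 0); split.
  move=> m mk; case: eqP => [->|_] //.
  by case: (A_rid Hg m (Iid k)) => _ [].
rewrite (bigD1 (Ordinal nk)) //= eqxx big1 ?addr0 // => i /negbTE Hi.
case: eqP => // Ein; exfalso; move: Hi; suff -> : i = Ordinal nk by rewrite eqxx.
by apply: val_inj.
Qed.


Lemma main_chain : right_noetherian_in (Sg 0) ->
  exists K, forall k, (K <= k)%N -> forall x, I k x <-> I K x.
Proof.
move=> Hr.
have [D HD] := Hr N N_rid N_mono.
have step2 : forall b, exists K, (D <= K)%N /\ forall n, (n < b)%N -> forall k, (K <= k)%N ->
    forall z, A Sg n (I k) z -> A Sg n (I K) z.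
  elim=> [|b [K [DK HK]]]; first by exists D.
  have [Kb HKb] := Hr (fun k => A Sg b (I k)) (fun k => A_rid Hg b (Iid k))
    (fun k z => Amono (fun y => Imono (n:=k) (x:=y)) (z:=z)).
  exists (maxn K Kb); split; first by rewrite leq_max DK.
  move=> n; rewrite ltnS leq_eqVlt => /orP [/eqP ->|nb] k kK z Hz.
    have kb : (Kb <= k)%N by apply: leq_trans kK; rewrite leq_maxr.
    apply: Amono ((HKb k kb z).1 Hz) => y; apply: Ichain; exact: leq_maxr.
  have kb : (K <= k)%N by apply: leq_trans kK; rewrite leq_maxl.
  apply: Amono (HK n nb k kb z Hz) => y; apply: Ichain; exact: leq_maxl.
have [K [DK HK]] := step2 D.
exists K => k kK.
have KI : forall x, I K x -> I k x by move=> x; apply: Ichain.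
have HT : forall n a, T Sg n (I k) a -> T Sg n (I K) a.
  move=> n a; case: (ltnP n D) => nD.
    apply: (key Hg He (Iid K)) => z Hz; apply: (GA Hg (Iid K) (leqnn n)).
    exact: HK nD k kK z Hz.
  apply: (key Hg He (Iid K)) => z Hz.
  pose k' := maxn (maxn k n.+1) D.
  have : N k' z.
    apply: (@A_in_N n); first by rewrite !leq_max ltnSn orbT.
    by apply: Amono Hz => y; apply: Ichain; rewrite !leq_max leqnn.
  rewrite (HD k'); last by rewrite leq_maxr.
  move=> [f [Hf ->]]; apply: sum_closed; [exact: (G0 Hg (Iid K)) | by move=> *; apply: (GD Hg (Iid K)) |].
  move=> i; apply: (Gmono (J := I D)) => [y|]; first exact: Ichain.
  apply: (GA Hg (Iid D) (m := i)); last exact: Hf.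
  by apply: leq_trans nD; apply: ltnW.
have HW : forall n x, Wlt Sg n x -> I k x -> I K x.
  elim=> [|n IH] x Wx Ix; first by rewrite (Wset_empty Wx); apply: (J0 (Iid K)).
  have [a [y [Ha [Hy Ex]]]] : exists a y, Sg n%:Z a /\ Wlt Sg n y /\ x = a + y.
    apply: (Wset_split Hg _ Wx) => d /andP [H1 H2].
    case: (d =P n%:Z) => [->|Hd]; [by left | right; apply/andP; split; lia].
  have Ta : T Sg n (I k) a by split => //; exists y; split => //; rewrite -Ex.
  have [_ [y' [Hy' Jy']]] := HT n a Ta.
  have E : x = (y - y') + (a + y') by rewrite Ex [RHS]addrCA subrK.
  rewrite E; apply: (JD (Iid K)) => //; apply: IH.
    by apply: WsetD => //; apply: (WsetN Hg).
  have -> : y - y' = x - (a + y') by rewrite Ex opprD addrACA subrr add0r.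
  by apply: (JB (Iid k)) => //; apply: KI.
have HN : forall m x, Wset Sg (fun d => - (m%:Z) <= d) x -> I k x -> I K x.
  elim=> [|m IH] x Wx Ix.
    have [n Hn] := Wset_bound (Wset_mono (Q := fun d => 0 <= d) (fun d Hd => Hd) Wx).
    exact: HW Hn Ix.
  have [b [y [Hb [Hy Ex]]]] : exists b y, Sg (- (m.+1%:Z)) b /\
      Wset Sg (fun d => - (m%:Z) <= d) y /\ x = b + y.
    apply: (Wset_split Hg _ Wx) => d H1.
    case: (d =P - (m.+1%:Z)) => [->|Hd]; [by left | right; lia].
  case: (He (m.+1%:Z)) => e [He1 He2].
  have e0 : Sg 0 e by rewrite -(addrN (m.+1%:Z)); apply: Sg_mulset.
  have xe : I K (x * e).
    case: He1 => j [s [t [Hst ->]]]; rewrite mulr_sumr.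
    apply: sum_closed; [exact: (J0 (Iid K)) | by move=> *; apply: (JD (Iid K)) |].
    move=> i; case: (Hst i) => Hs Ht; rewrite mulrA; apply: (JM _ (Iid K)).
    have Wxs : Wset Sg (fun d => 0 <= d) (x * s i).
      by apply: (WsetM Hg Hs) Wx => d Hd; lia.
    have [n Hn] := Wset_bound Wxs.
    by apply: HW Hn _; apply: (JM _ (Iid k)).
  have E : x - x * e = y - y * e by rewrite Ex mulrDl He2 // opprD addrACA subrr add0r.
  have : I K (x - x * e).
    apply: IH; last by apply: (JB (Iid k)) => //; apply: (JM _ (Iid k)).
    rewrite E; apply: WsetD => //; apply: (WsetN Hg).
    by apply: (WsetM Hg e0) Hy => d Hd; rewrite addr0.
  by move=> H; rewrite -(subrK (x * e) x); apply: (JD (Iid K)).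
move=> x; split; last exact: KI.
by move=> Ix; have [m Hm] := Wset_all Hg x; exact: HN Hm Ix.
Qed.

End Main2.

Lemma right_main (S : nzRingType) (Sg : int -> S -> Prop) :
  is_Zgrading Sg ->
  (forall i, exists e, mulset (Sg i) (Sg (- i)) e /\ forall b, Sg (- i) b -> b * e = b) ->
  right_noetherian_in (Sg 0) -> right_noetherian S.
Proof. by move=> Hg He Hr I Iid Imono; apply: (main_chain Hg He Iid Imono). Qed.

Lemma eps_He (S : nzRingType) (Sg : int -> S -> Prop) : epsilon_strong Sg ->
  forall i, exists e, mulset (Sg i) (Sg (- i)) e /\ forall b, Sg (- i) b -> b * e = b.
Proof.
case=> Hg Hs i; case: (Hs i) => _ [e [He1 He2]]; exists e; split => // b Hb.
case: (Hs (- i)) => Hiff _; have := (Hiff b).2 Hb; rewrite opprK.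
apply: (mulset_ind (P := fun b => b * e = b)).
- by rewrite mul0r.
- by move=> x y Hx Hy; rewrite mulrDl Hx Hy.
move=> p q Hp Hq.
apply: (mulset_ind (P := fun p => p * q * e = p * q)) Hp.
- by rewrite !mul0r.
- by move=> x y Hx Hy; rewrite !mulrDl Hx Hy.
by move=> a c Ha Hc; rewrite -!mulrA [c * (q * e)]mulrA (proj2 (He2 _ (mulset1 Hc Hq))).

Qed.

Lemma eps_Hec (S : nzRingType) (Sg : int -> S -> Prop) : epsilon_strong Sg ->
  is_Zgrading (S := S^c) Sg /\
  forall i, exists e, mulset (S := S^c) (Sg i) (Sg (- i)) e /\
    forall b, Sg (- i) b -> (b : S^c) * e = b.
Proof.
case=> Hg Hs; split.
  case: Hg => H1 H2 H3 H4; split.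
  - exact: H1.
  - exact: H2.
  - exact: H3.
  - by move=> i j x y Hx Hy; rewrite addrC; exact: (H4 j i y x Hy Hx).
move=> i; case: (Hs (- i)) => Hiff [e [He1 He2]]; exists e; split.
  move: He1; rewrite opprK => -[n [a [b [Hab Ee]]]].
  exists n, b, a; split; last exact: Ee.
  by move=> k; case: (Hab k).
move=> b Hb.
apply: (left_id_mulset (M := mulset (Sg (- i)) (Sg (- - i))) (B := Sg (- i))).
  by move=> p Hp; case: (He2 p Hp).
exact: (Hiff b).2 Hb.
Qed.

Theorem proposition3p6 (S : nzRingType) (Sg : int -> S -> Prop) :
  epsilon_strong Sg ->
  (right_noetherian_in (Sg 0%R) -> right_noetherian S) /\
  (left_noetherian_in (Sg 0%R) -> left_noetherian S).
Proof.
move=> Heps; split.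
  by move=> Hr; apply: (right_main Heps.1 (eps_He Heps) Hr).
move=> Hl; have [Hgc Hec] := eps_Hec Heps.
exact: (right_main Hgc Hec Hl).
Qed.
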